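(* Let $N\ge1$, $\chi_1,\dots,\chi_N\in\mathbb{C}$, and let $\Psi(x_1,\dots,x_N;t_1,\dots,t_N)$ be a holomorphic function on an open domain satisfying $$\sum_{i=1}^N(-2x_i\partial_{x_i}+2\chi_i)\Psi=0,\qquad \sum_{i=1}^N\partial_{x_i}\Psi=0,\qquad \sum_{i=1}^N(-x_i^2\partial_{x_i}+2\chi_ix_i)\Psi=0.$$ Define, on an open simply connected domain of $(x_1,\dots,x_{N+1};t_1,\dots,t_{N+1})$ where $x_i\neq x_{N+1}$, $t_i\neq t_{N+1}$ and $\xi_i=-\frac{t_i-t_{N+1}}{x_i-x_{N+1}}$ stays in the domain of $\Psi$ (with fixed branches of the powers), $$\Upsilon=\prod_{i=1}^N\left(\frac{(x_i-x_{N+1})^2}{t_i-t_{N+1}}\right)^{\chi_i}\Psi(\xi_1,\dots,\xi_N;t_1,\dots,t_N).$$ Then, with $\chi_{N+1}=k/2$ for an arbitrary $k\in\mathbb{C}$, $$\sum_{i=1}^{N+1}\partial_{x_i}\Upsilon=0,\qquad\sum_{i=1}^{N+1}t_i\partial_{x_i}\Upsilon=0,\qquad\sum_{i=1}^{N+1}(-2x_i\partial_{x_i}+2\chi_i)\Upsilon-k\Upsilon=0.$$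
   Context: These are the invariance (Ward) identities for $\mathrm{PGL}_2(\mathbb{C})$ conformal blocks on $\mathbb{P}^1$ with parabolic structures: $x_i$ are coordinates on the big cell of the flag variety at the $i$-th marked point $t_i$, and $e,h,f\in\mathfrak{sl}_2$ act at point $i$ by $\partial_{x_i}$, $-2x_i\partial_{x_i}+2\chi_i$, $-x_i^2\partial_{x_i}+2\chi_ix_i$. The functions are treated as holomorphic functions of all variables; $\partial_{x_i}$ in the identities for $\Upsilon$ denotes partial derivative in the variables $(x_1,\dots,x_{N+1},t_1,\dots,t_{N+1})$. *)

(* Defs.v *)
(* Complex numbers are  R[i]  for  R : realType,
   used through the regular (self-normed) copy  (R[i])^o  so that C^n carries
   its canonical topology / normed C-module structure. *)
From HB Require Import structures.
From mathcomp Require Import all_boot all_algebra.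
From mathcomp Require Import all_classical all_reals all_analysis.
From mathcomp Require Export complex.
Import GRing.Theory Num.Theory.
Import numFieldNormedType.Exports.

Set Implicit Arguments.
Unset Strict Implicit.
Unset Printing Implicit Defensive.

Local Open Scope ring_scope.
Local Open Scope complex_scope.

Notation CC R := ((R[i])^o).

Notation pt R n := ('rV[CC R]_n * 'rV[CC R]_n)%type.

Definition xco (R : realType) (n : nat) (p : pt R n) (j : 'I_n) : CC R := p.1 0 j.
Definition tco (R : realType) (n : nat) (p : pt R n) (j : 'I_n) : CC R := p.2 0 j.

Definition dx (R : realType) (n : nat) (f : pt R n -> CC R) (p : pt R n)
  (j : 'I_n) : CC R := 'D_(('e_j : 'rV[CC R]_n), (0 : 'rV[CC R]_n)) f p.

Definition holomorphic_on (R : realType) (n : nat) (D : set (pt R n))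
  (f : pt R n -> CC R) : Prop :=
  open D /\ (forall p, D p -> differentiable f p).

Definition cexp (R : realType) (z : CC R) : CC R :=
  (expR (complex.Re (z : R[i])) * cos (complex.Im (z : R[i])))
    +i* (expR (complex.Re (z : R[i])) * sin (complex.Im (z : R[i]))).

Definition log_branch (R : realType) (n : nat) (U : set (pt R n))
  (w L : pt R n -> CC R) : Prop :=
  (forall p, U p -> differentiable L p) /\ (forall p, U p -> cexp (L p) = w p).

Definition iN (N : nat) (j : 'I_N) : 'I_N.+1 := widen_ord (leqnSn N) j.

Definition wq (R : realType) (N : nat) (j : 'I_N) (p : pt R N.+1) : CC R :=
  (xco p (iN j) - xco p ord_max) ^+ 2 / (tco p (iN j) - tco p ord_max).

Definition subst_pt (R : realType) (N : nat) (p : pt R N.+1) : pt R N :=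
  (\row_(j < N) (- (tco p (iN j) - tco p ord_max) / (xco p (iN j) - xco p ord_max)),
   \row_(j < N) tco p (iN j)).

(* Upsilon = prod_i cexp(chi_i L_i) * Psi(xi; t), with L_i the chosen branch
   of log((x_i-x_{N+1})^2/(t_i-t_{N+1})), i.e. cexp(chi_i L_i) is the chosen
   branch of ((x_i-x_{N+1})^2/(t_i-t_{N+1}))^chi_i *)
Definition Upsilon (R : realType) (N : nat) (chi : 'I_N.+1 -> CC R)
  (L : 'I_N -> pt R N.+1 -> CC R) (Psi : pt R N -> CC R) (p : pt R N.+1) : CC R :=
  (\prod_(j < N) cexp (chi (iN j) * L j p)) * Psi (subst_pt p).

(* Main.v *)
Require Import Defs.
From HB Require Import structures.
From mathcomp Require Import all_boot all_algebra.
From mathcomp Require Import all_classical all_reals all_analysis.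
From mathcomp Require Import complex.
From mathcomp Require Import ring lra.
Import GRing.Theory Num.Theory.
Import order.Order.TTheory.
Import numFieldNormedType.Exports.
Local Open Scope ring_scope.
Local Open Scope classical_set_scope.

Section Gen.
Context {K : numFieldType}.

Lemma derive_line {V W : normedModType K} (f : V -> W) x v :
  'D_v f x = 'D_1 (fun h : K => f (h *: v + x)) 0.
Proof.
rewrite /derive.
have E : (fun h : K => h^-1 *: ((f \o shift x) (h *: v) - f x)) =
  (fun h : K => h^-1 *: (((fun h => f (h *: v + x)) \o shift 0) h%:A - f (0 *: v + x))).
  by apply: funext => h /=; rewrite addr0 scale0r add0r [_%:A]mulr1 addrC.
by rewrite E.
Qed.

Lemma chain1 {V W : normedModType K} {g : K -> V} {f : V -> W} {x : K} {dg : V} :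
  is_derive x (1:K) g dg -> differentiable f (g x) ->
  is_derive x (1:K) (f \o g) ('d f (g x) dg).
Proof.
move=> [gd gv] fd.
have dgd : differentiable g x by apply/derivable1_diffP.
have dfg := differentiable_comp dgd fd.
split; first by apply/derivable1_diffP.
rewrite deriveE // diff_comp // /= -gv deriveE //.
Qed.

End Gen.

Section Real.
Variable R : realType.

Lemma mvt_bound (f df : R -> R) (B x : R) :
  f 0 = 0 -> (forall c : R, is_derive c (1:R) f (df c)) ->
  (forall c, `|c| <= `|x| -> `|df c| <= B) -> `|f x| <= B * `|x|.
Proof.
move=> f0 fd dB.
have cont : forall a b : R, {within `[a, b], continuous f}.
  by move=> a b; apply: derivable_within_continuous => y _; exact: ex_derive.
have [x0|x0|->] := ltgtP x 0; last by rewrite f0 normr0 mulr0.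
- have [c cx E] := MVT_segment (ltW x0) (fun y _ => fd y) (cont x 0).
  move: E; rewrite f0 !sub0r => /(congr1 (fun t => - t)); rewrite opprK mulrN opprK => ->.
  rewrite normrM ler_wpM2r // dB //.
  by rewrite !ler0_norm ?(itvP cx) ?(ltW x0) // lerN2 (itvP cx).
- have [c cx E] := MVT_segment (ltW x0) (fun y _ => fd y) (cont 0 x).
  move: E; rewrite f0 subr0 subr0 => ->.
  rewrite normrM ler_wpM2r // dB //.
  by rewrite ger0_norm ?(itvP cx) // ger0_norm ?(ltW x0) // (itvP cx).
Qed.

End Real.
Section R2.
Context {R : realType}.

Lemma sin_le (x : R) : `|sin x| <= `|x|.
Proof.
have := @mvt_bound R sin cos 1 x (sin0 R) (fun c => is_derive_sin c) (fun c _ => cos_max c).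
by rewrite mul1r.
Qed.

Lemma cos1_le (x : R) : `|cos x - 1| <= `|x|.
Proof.
have := @mvt_bound R (fun y => cos y - 1) (fun y => - sin y) 1 x.
rewrite mul1r; apply; first by rewrite cos0 subrr.
  by move=> c; apply: is_derive_eq; rewrite subr0.
by move=> c _; rewrite normrN sin_max.
Qed.

Lemma cos2_le (x : R) : `|cos x - 1| <= `|x| * `|x|.
Proof.
apply: (@mvt_bound R (fun y => cos y - 1) (fun y => - sin y)).
- by rewrite cos0 subrr.
- by move=> c; apply: is_derive_eq; rewrite subr0.
- by move=> c cx; rewrite normrN (le_trans (sin_le c)).
Qed.

Lemma sin2_le (x : R) : `|sin x - x| <= `|x| * `|x|.
Proof.
apply: (@mvt_bound R (fun y => sin y - y) (fun y => cos y - 1)).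
- by rewrite sin0 subrr.
- by move=> c cx; rewrite (le_trans (cos1_le c)).
Qed.

Lemma expR_mono_abs (c x : R) : `|c| <= `|x| -> `|expR c| <= expR `|x|.
Proof.
move=> cx; rewrite ger0_norm ?expR_ge0 // ler_expR.
exact: le_trans (ler_norm c) cx.
Qed.

Lemma exp1_le (x : R) : `|expR x - 1| <= expR `|x| * `|x|.
Proof.
apply: (@mvt_bound R (fun y => expR y - 1) expR).
- by rewrite expR0 subrr.
- by move=> c; apply: is_derive_eq; rewrite subr0.
- by move=> c cx; apply: expR_mono_abs.
Qed.

Lemma exp2_le (x : R) : `|expR x - 1 - x| <= expR `|x| * `|x| * `|x|.
Proof.
apply: (@mvt_bound R (fun y => expR y - 1 - y) (fun y => expR y - 1)).
- by rewrite expR0 !subrr.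
- by move=> c; apply: is_derive_eq; rewrite subr0.
- move=> c cx; rewrite (le_trans (exp1_le c)) //.
  by rewrite ler_pM ?expR_ge0 // ler_expR.
Qed.
End R2.

Lemma quad_lim (K : numFieldType) (g : K -> K) (C : K) : 0 <= C ->
  (forall h : K, h != 0 -> `|h| <= 1 -> `|g h - 1| <= C * `|h|) ->
  g h @[h --> (0:K)^'] --> (1:K).
Proof.
move=> C0 Hg; apply/cvgrPdistC_le => e e0.
rewrite near_withinE.
have D0 : 0 < C + 1 + e by rewrite addr_gt0 // ltr_wpDl.
exists (e / (C + 1 + e)); first by rewrite /= divr_gt0.
move=> y /= ye yn0; rewrite sub0r normrN in ye.
have hd1 : e / (C + 1 + e) <= 1.
  by rewrite ler_pdivrMr // mul1r lerDr addr_ge0.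
rewrite (le_trans (Hg y yn0 _)) //; first by rewrite (le_trans (ltW ye)).
rewrite (le_trans (ler_wpM2l C0 (ltW ye))) //.
by rewrite mulrA ler_pdivrMr // mulrC ler_pM2l // -addrA lerDl addr_ge0 // ltW.
Qed.

Section Cx.
Context {R : realType}.
Local Open Scope complex_scope.

Definition nc (z : R[i]) : R := Num.sqrt (complex.Re z ^+ 2 + complex.Im z ^+ 2).

Lemma normK (z : CC R) : `|z| = (nc z)%:C.
Proof. exact: normc_def. Qed.

Lemma re_le (z : R[i]) : `|complex.Re z| <= nc z.
Proof. by rewrite /nc -sqrtr_sqr; apply: ler_wsqrtr; rewrite lerDl sqr_ge0. Qed.

Lemma im_le (z : R[i]) : `|complex.Im z| <= nc z.
Proof. by rewrite /nc -sqrtr_sqr; apply: ler_wsqrtr; rewrite lerDr sqr_ge0. Qed.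

Lemma nc_le (z : R[i]) : nc z <= `|complex.Re z| + `|complex.Im z|.
Proof.
rewrite /nc -[X in _ <= X]ger0_norm ?addr_ge0 // -sqrtr_sqr; apply: ler_wsqrtr.
rewrite sqrrD !real_normK ?num_real //.
have := mulr_ge0 (normr_ge0 (complex.Re z)) (normr_ge0 (complex.Im z)).
rewrite mulr2n; lra.
Qed.

Lemma cexpD (z w : CC R) : cexp (z + w) = cexp z * cexp w.
Proof.
case: z => a b; case: w => c d; rewrite /cexp /=.
by rewrite expRD cosD sinD; simpc; congr (_ +i* _); ring.
Qed.

Lemma cexp0 : cexp (0 : CC R) = 1.
Proof. by rewrite /cexp /= expR0 cos0 sin0 !mul1r. Qed.

Lemma cexp_est (h : CC R) : nc h <= 1 ->
  nc (cexp h - 1 - h) <= (3 * expR 1 + 1) * (nc h * nc h).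
Proof.
case: h => a b; rewrite /nc /=.
set n := Num.sqrt (a ^+ 2 + b ^+ 2) => n1.
have an : `|a| <= n by have := re_le (a +i* b).
have bn : `|b| <= n by have := im_le (a +i* b).
set E := expR 1.
have E0 : 0 <= E by apply: expR_ge0.
have Ea : expR `|a| <= E by rewrite ler_expR (le_trans an).
have Ea' : expR a <= E by rewrite ler_expR (le_trans (ler_norm a)) // (le_trans an).
have p1 : `|a| * `|a| <= n * n by rewrite ler_pM.
have p2 : `|b| * `|b| <= n * n by rewrite ler_pM.
have p3 : `|a| * `|b| <= n * n by rewrite ler_pM.
have t1 : `|expR a - 1 - a| <= E * (n * n).
  rewrite (le_trans (exp2_le a)) // -mulrA ler_pM // ?expR_ge0 // mulr_ge0.
have t2 : `|expR a * (cos b - 1)| <= E * (n * n).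
  rewrite normrM ger0_norm ?expR_ge0 // ler_pM ?expR_ge0 //.
  exact: le_trans (cos2_le b) p2.
have t3 : `|(expR a - 1) * sin b| <= E * (n * n).
  rewrite normrM (le_trans (ler_wpM2r _ (exp1_le a))) //.
  rewrite -mulrA ler_pM // ?expR_ge0 ?mulr_ge0 //.
  by rewrite (le_trans _ p3) // ler_wpM2l // sin_le.
have t4 : `|sin b - b| <= n * n by exact: le_trans (sin2_le b) p2.
have := nc_le ((expR a * cos b - 1 - a) +i* (expR a * sin b - 0 - b)).
rewrite /nc /= => H; apply: (le_trans H).
have eX : expR a * cos b - 1 - a = (expR a - 1 - a) + expR a * (cos b - 1) by ring.
have eY : expR a * sin b - 0 - b = (expR a - 1) * sin b + (sin b - b) by ring.
rewrite eX eY.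
have hX := ler_normD (expR a - 1 - a) (expR a * (cos b - 1)).
have hY := ler_normD ((expR a - 1) * sin b) (sin b - b).
have hnn : 0 <= n * n by rewrite mulr_ge0 // sqrtr_ge0.
have -> : (3 * E + 1) * (n * n) = 3 * (E * (n * n)) + n * n by ring.
lra.
Qed.
End Cx.

Section Cx2.
Context {R : realType}.
Local Open Scope complex_scope.

Lemma cexp_quot : (fun h : CC R => h^-1 * (cexp h - 1)) h @[h --> (0 : CC R)^'] --> (1 : CC R).
Proof.
apply: (@quad_lim _ _ ((3 * expR 1 + 1)%:C)).
  by rewrite ler0c addr_ge0 // mulr_ge0 // expR_ge0.
move=> h hn0 h1.
have -> : h^-1 * (cexp h - 1) - 1 = h^-1 * (cexp h - 1 - h).
  by rewrite [in RHS]mulrBr mulVf // .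
rewrite normrM normfV.
have nh1 : nc h <= 1 by move: h1; rewrite normK -(lecR (R:=R)).
have H : `|cexp h - 1 - h| <= (3 * expR 1 + 1)%:C * (`|h| * `|h|).
  by rewrite !normK -!rmorphM lecR; exact: cexp_est.
rewrite (le_trans (ler_wpM2l _ H)) ?invr_ge0 //.
by rewrite mulrCA mulKf // normr_eq0.
Qed.

Lemma is_derive_cexp (z : CC R) : is_derive z (1 : CC R) (@cexp R) (cexp z).
Proof.
have H : (fun h : CC R => h^-1 *: ((@cexp R \o shift z) (h *: 1) - cexp z)) =
         (fun h => cexp z * (h^-1 * (cexp h - 1))).
  apply: funext => h /=; rewrite cexpD.
  rewrite -[h%:A]/(h * 1) mulr1 -[h^-1 *: _]/(h^-1 * _); ring.
have L : (fun h : CC R => h^-1 *: ((@cexp R \o shift z) (h *: 1) - cexp z)) h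
    @[h --> (0 : CC R)^'] --> cexp z.
  rewrite H -[X in _ --> X]mulr1; apply: cvgMl_tmp; exact: cexp_quot.
apply: DeriveDef; first by apply/cvg_ex; exists (cexp z).
exact: cvg_lim L.
Qed.
End Cx2.

Section G.
Context {K : numFieldType}.

Lemma is_derive_scall {W : normedModType K} {f : K -> K} (u : W) {x df : K} :
  is_derive x (1:K) f df -> is_derive x (1:K) (fun h => f h *: u) (df *: u).
Proof.
move=> fd.
have := chain1 fd (@ex_diff _ _ _ _ _ _ _ (is_diff_scalel (f x) u)).
by rewrite diff_val.
Qed.

Lemma is_derive_sumf {W : normedModType K} {n} {f : 'I_n -> K -> W} {df : 'I_n -> W} {x : K} :
  (forall i, is_derive x (1:K) (f i) (df i)) ->
  is_derive x (1:K) (fun h => \sum_(i < n) f i h) (\sum_(i < n) df i).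
Proof. by move=> H; have := is_derive_sum H; rewrite fct_sumE. Qed.

Lemma chainK {g f : K -> K} {x dg df : K} :
  is_derive x (1:K) g dg -> is_derive (g x) (1:K) f df ->
  is_derive x (1:K) (fun h => f (g h)) (dg * df).
Proof.
move=> gd fdd.
have fd : differentiable f (g x) by apply/derivable1_diffP; exact: ex_derive.
have E : 'd f (g x) dg = dg * df.
  rewrite -[X in 'd f (g x) X]mulr1 -[dg * 1]/(dg *: (1:K)) linearZ /= -deriveE //.
  by rewrite derive_val.
by have := chain1 gd fd; rewrite E.
Qed.
End G.

Lemma cexp_prod {R : realType} n (F : 'I_n -> CC R) :
  \prod_(i < n) cexp (F i) = cexp (\sum_(i < n) F i).
Proof. by rewrite (big_morph _ (@cexpD R) (@cexp0 R)). Qed.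

Lemma sum_e {R : pzRingType} n (w : 'I_n -> R) (m : 'I_n) :
  \sum_(j < n) w j * ('e_j : 'rV[R]_n) 0 m = w m.
Proof.
rewrite (bigD1 m) //= mxE !eqxx /= mulr1 big1 ?addr0 // => k km.
by rewrite mxE eq_sym (negbTE km) andbF mulr0.
Qed.

Lemma pair_sum {R : realType} n m (s : 'I_n -> CC R) (r : 'I_n -> 'rV[CC R]_m) :
  \sum_(i < n) (s i *: ((r i, 0) : pt R m)) = (\sum_(i < n) s i *: r i, 0).
Proof.
rewrite (big_morph (fun x : 'rV[CC R]_m => ((x, 0) : pt R m)) (id1 := 0) (op1 := +%R)).
- by apply: eq_bigr => i _; rewrite -[s i *: (r i, 0)]/(s i *: r i, s i *: 0) scaler0.
- by move=> x y; rewrite -[((x, 0) : pt R m) + (y, 0)]/(x + y, 0 + 0) addr0.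
- by [].
Qed.

Definition aa {R : realType} {N} (p : pt R N.+1) (i : 'I_N) : CC R := xco p (iN i) - xco p ord_max.
Definition bb {R : realType} {N} (p : pt R N.+1) (i : 'I_N) : CC R := tco p (iN i) - tco p ord_max.
Definition cc {R : realType} {N} (j : 'I_N.+1) (i : 'I_N) : CC R :=
  ('e_j : 'rV[CC R]_N.+1) 0 (iN i) - ('e_j : 'rV[CC R]_N.+1) 0 ord_max.

Lemma xcoP {R : realType} {n} (h : CC R) (v p : pt R n) m :
  xco (h *: v + p) m = h * v.1 0 m + xco p m.
Proof. by rewrite /xco /= !mxE. Qed.

Lemma tcoP {R : realType} {n} (h : CC R) (v p : pt R n) m :
  tco (h *: v + p) m = h * v.2 0 m + tco p m.
Proof. by rewrite /tco /= !mxE. Qed.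

Lemma dl_lemma {R : realType} {N : nat} (U : set (pt R N.+1)) (hU : open U)
  (hUx : forall p, U p -> forall j : 'I_N, xco p (iN j) <> xco p ord_max)
  (hUt : forall p, U p -> forall j : 'I_N, tco p (iN j) <> tco p ord_max)
  (L : 'I_N -> pt R N.+1 -> CC R) (hL : forall j, log_branch U (wq j) (L j))
  (p : pt R N.+1) (hp : U p) (j : 'I_N.+1) (i : 'I_N) :
  is_derive (0 : CC R) (1 : CC R)
    (fun h : CC R => L i (h *: (('e_j, 0) : pt R N.+1) + p)) (2 * cc j i / aa p i).
Proof.
set v : pt R N.+1 := ('e_j, 0).
set P := fun h : CC R => h *: v + p.
have P0 : P 0 = p by rewrite /P scale0r add0r.
have dP : is_derive (0 : CC R) (1 : CC R) P v.
  have := is_deriveD (is_derive_scall v (is_derive_id (0 : CC R) (1 : CC R)))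
                     (is_derive_cst p (0 : CC R) (1 : CC R)).
  by rewrite scale1r addr0.
have PU : \forall h \near (0 : CC R), U (P h).
  have Pd : differentiable P 0 by apply/derivable1_diffP; exact: ex_derive.
  apply: (differentiable_continuous Pd); rewrite P0.
  by apply: open_nbhs_nbhs; split.
set D := 'd (L i) (P 0) v.
have h1 : is_derive (0 : CC R) (1 : CC R) (L i \o P) D.
  apply: chain1; rewrite P0; exact: (hL i).1.
have h2 : is_derive (0 : CC R) (1 : CC R) (fun h => cexp (L i (P h))) (D * cexp (L i (P 0))).
  exact (chainK h1 (is_derive_cexp ((L i \o P) 0))).
have h3 : is_derive (0 : CC R) (1 : CC R) (fun h => wq i (P h)) (D * cexp (L i (P 0))).
  apply: near_eq_is_derive h2; near=> h.
  by apply: (hL i).2; near: h.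
have eW : (fun h => wq i (P h)) = (fun h => (aa p i + h * cc j i) ^+ 2 / bb p i).
  apply: funext => h; rewrite /wq /P !xcoP !tcoP /aa /bb /cc /v /= !mxE.
  by rewrite !mulr0 !add0r; congr (_ ^+ 2 * _); ring.
have h4 : is_derive (0 : CC R) (1 : CC R) (fun h => wq i (P h)) (2 * aa p i * cc j i / bb p i).
  rewrite eW; apply: is_derive_eq.
  by rewrite /GRing.scale /=; ring.
have E : D * cexp (L i (P 0)) = 2 * aa p i * cc j i / bb p i.
  by case: h3 => _ <-; case: h4 => _ <-.
have a0 : aa p i != 0 by rewrite /aa subr_eq0; apply/eqP; exact: hUx.
have b0 : bb p i != 0 by rewrite /bb subr_eq0; apply/eqP; exact: hUt.
rewrite P0 (hL i).2 // in E.
have -> : 2 * cc j i / aa p i = D.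
  have E' : D * (aa p i ^+ 2 / bb p i) = 2 * aa p i * cc j i / bb p i := E.
  have -> : D = (D * (aa p i ^+ 2 / bb p i)) * (bb p i / aa p i ^+ 2).
    by field; rewrite a0 b0.
  by rewrite E'; field; rewrite a0 b0.
exact h1.
Unshelve. all: by end_near.
Qed.

Lemma is_derive_inv {K : numFieldType} {V : normedModType K} {f : V -> K} {x v : V} {df : K} :
  f x != 0 -> is_derive x v f df -> is_derive x v (fun y => (f y)^-1) (- (f x) ^- 2 *: df).
Proof.
move=> fx0 [fd <-]; apply: DeriveDef; first exact: derivableV.
exact: deriveV.
Qed.

Section T.
Context {R : realType} {N : nat}.
Lemma t_sig (a b c : CC R) : a != 0 ->
  is_derive (0 : CC R) (1 : CC R) (fun h : CC R => - b / (a + h * c)) (b * c / a ^+ 2).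
Proof.
move=> a0.
have hg : is_derive (0 : CC R) (1 : CC R) (fun h : CC R => a + h * c) c.
  apply: is_derive_eq; rewrite /GRing.scale /=; ring.
have g0 : a + 0 * c != 0 by rewrite mul0r addr0.
have := is_deriveZ (- b) (is_derive_inv (f := fun h : CC R => a + h * c) g0 hg).
move=> H; apply: (is_derive_eq H).
by rewrite /GRing.scale /= mul0r addr0; field.
Qed.

Definition Tm (chi : 'I_N.+1 -> CC R) (L : 'I_N -> pt R N.+1 -> CC R)
  (Psi : pt R N -> CC R) (p : pt R N.+1) (i : 'I_N) : CC R :=
  (\prod_(k < N) cexp (chi (iN k) * L k p)) *
  (chi (iN i) * (2 / aa p i) * Psi (subst_pt p)
   + bb p i / aa p i ^+ 2 * dx Psi (subst_pt p) i).

Lemma dxU (chi : 'I_N.+1 -> CC R)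
  (D : set (pt R N)) (Psi : pt R N -> CC R) (hPsi : holomorphic_on D Psi)
  (U : set (pt R N.+1)) (hU : open U)
  (hUx : forall p, U p -> forall j : 'I_N, xco p (iN j) <> xco p ord_max)
  (hUt : forall p, U p -> forall j : 'I_N, tco p (iN j) <> tco p ord_max)
  (hUD : forall p, U p -> D (subst_pt p))
  (L : 'I_N -> pt R N.+1 -> CC R) (hL : forall j, log_branch U (wq j) (L j))
  (p : pt R N.+1) (hp : U p) (j : 'I_N.+1) :
  dx (Upsilon chi L Psi) p j = \sum_(i < N) cc j i * Tm chi L Psi p i.
Proof.
rewrite /dx derive_line.
set v : pt R N.+1 := ('e_j, 0).
set P := fun h : CC R => h *: v + p.
have P0 : P 0 = p by rewrite /P scale0r add0r.
have a0 : forall i, aa p i != 0 by move=> i; rewrite /aa subr_eq0; apply/eqP; exact: hUx.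
set S := fun h : CC R => \sum_(i < N) chi (iN i) * L i (P h).
have dS : is_derive (0 : CC R) (1 : CC R) S (\sum_(i < N) chi (iN i) * (2 * cc j i / aa p i)).
  apply: is_derive_sumf => i.
  exact (is_deriveZ (chi (iN i)) (@dl_lemma R N U hU hUx hUt L hL p hp j i)).
have dE := chainK dS (is_derive_cexp (S 0)).
set u := fun i : 'I_N => ((('e_i : 'rV[CC R]_N), 0) : pt R N).
set sig := fun (i : 'I_N) (h : CC R) => - bb p i / (aa p i + h * cc j i).
set trow : pt R N := (0, \row_(k < N) tco p (iN k)).
set g := fun h : CC R => \sum_(i < N) sig i h *: u i + trow.
have eqg : forall h, subst_pt (P h) = g h.
  move=> h; rewrite /g /u pair_sum /trow.
  rewrite -[(_, 0) + (0, _)]/(_ + 0, 0 + _) addr0 add0r /subst_pt.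
  congr (_, _).
  - apply/rowP => k; rewrite mxE summxE.
    rewrite (eq_bigr (fun i => sig i h * ('e_i : 'rV[CC R]_N) 0 k)); last first.
      by move=> i _; rewrite [in LHS]mxE.
    rewrite sum_e /sig !xcoP !tcoP /aa /bb /cc /v /= !mxE.
    by rewrite !mulr0 !add0r; congr (- _ * _^-1); ring.
  - by apply/rowP => k; rewrite /= !mxE tcoP /v /= mxE mulr0 add0r.
have dg : is_derive (0 : CC R) (1 : CC R) g (\sum_(i < N) (bb p i * cc j i / aa p i ^+ 2) *: u i).
  have H := is_deriveD (is_derive_sumf (fun i => is_derive_scall (u i) (t_sig (aa p i) (bb p i) (cc j i) (a0 i)))) (is_derive_cst trow (0:CC R) (1:CC R)).
  rewrite addr0 in H; exact H.
have g0 : g 0 = subst_pt p by rewrite -eqg P0.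
have Psid : differentiable Psi (g 0) by rewrite g0; apply: hPsi.2; exact: hUD.
have dQ := chain1 dg Psid.
have eU : (fun h : CC R => Upsilon chi L Psi (h *: v + p)) = (fun h => cexp (S h) * Psi (g h)).
  by apply: funext => h; rewrite /Upsilon cexp_prod -eqg.
rewrite eU.
have dU := is_deriveM dE dQ.
have E : 'D_1 (fun h : CC R => cexp (S h) * Psi (g h)) 0 =
  cexp (S 0) *: 'd Psi (g 0) (\sum_(i < N) (bb p i * cc j i / aa p i ^+ 2) *: u i) +
       (Psi \o g) 0 *: ((\sum_(i < N) chi (iN i) * (2 * cc j i / aa p i)) * cexp (S 0)) :=
  @derive_val _ _ _ _ _ _ _ dU.
rewrite E /= g0.
have Psid' : differentiable Psi (subst_pt p) by rewrite -g0.
rewrite linear_sum.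
have -> : cexp (S 0) = \prod_(k < N) cexp (chi (iN k) * L k p) by rewrite /S P0 -cexp_prod.
have Esum : \sum_(i < N) 'd Psi (subst_pt p) ((bb p i * cc j i / aa p i ^+ 2) *: u i)
   = \sum_(i < N) (bb p i * cc j i / aa p i ^+ 2) * dx Psi (subst_pt p) i.
  by apply: eq_bigr => i _; rewrite linearZ /= /dx -deriveE.
rewrite Esum.
rewrite /GRing.scale /= mulr_sumr mulr_suml mulr_sumr -big_split /=.
apply: eq_bigr => i _; rewrite /Tm.
by field; rewrite a0.
Qed.
End T.

Local Close Scope classical_set_scope.

Theorem mainTheorem8 (R : realType) (N : nat) (hN : (0 < N)%N)
  (chi : 'I_N.+1 -> CC R) (k : CC R) (hk : chi ord_max = k / 2)
  (D : set (pt R N)) (Psi : pt R N -> CC R) (hPsi : holomorphic_on D Psi)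
  (hh : forall p, D p ->
     \sum_(j < N) (- 2 * xco p j * dx Psi p j + 2 * chi (iN j) * Psi p) = 0)
  (he : forall p, D p -> \sum_(j < N) dx Psi p j = 0)
  (hf : forall p, D p ->
     \sum_(j < N) (- (xco p j ^+ 2) * dx Psi p j
                   + 2 * chi (iN j) * xco p j * Psi p) = 0)
  (U : set (pt R N.+1)) (hU : open U)
  (hUx : forall p, U p -> forall j : 'I_N, xco p (iN j) <> xco p ord_max)
  (hUt : forall p, U p -> forall j : 'I_N, tco p (iN j) <> tco p ord_max)
  (hUD : forall p, U p -> D (subst_pt p))
  (L : 'I_N -> pt R N.+1 -> CC R) (hL : forall j, log_branch U (wq j) (L j)) :
  forall p, U p ->
    [/\ \sum_(j < N.+1) dx (Upsilon chi L Psi) p j = 0,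
        \sum_(j < N.+1) tco p j * dx (Upsilon chi L Psi) p j = 0
      & \sum_(j < N.+1) (- 2 * xco p j * dx (Upsilon chi L Psi) p j
                         + 2 * chi j * Upsilon chi L Psi p)
          - k * Upsilon chi L Psi p = 0].
Proof.
move=> p hp.
have dxE := @dxU R N chi D Psi hPsi U hU hUx hUt hUD L hL p hp.
have SW : forall w : 'I_N.+1 -> CC R,
  \sum_(j < N.+1) w j * dx (Upsilon chi L Psi) p j =
  \sum_(i < N) Tm chi L Psi p i * (w (iN i) - w ord_max).
  move=> w.
  rewrite (eq_bigr (fun j => \sum_(i < N) w j * (cc j i * Tm chi L Psi p i))); last first.
    by move=> j _; rewrite dxE mulr_sumr.
  rewrite exchange_big /=; apply: eq_bigr => i _.
  rewrite (eq_bigr (fun j => Tm chi L Psi p i * (w j * ('e_j : 'rV[CC R]_N.+1) 0 (iN i))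
      - Tm chi L Psi p i * (w j * ('e_j : 'rV[CC R]_N.+1) 0 ord_max))); last first.
    by move=> j _; rewrite /cc; ring.
  by rewrite sumrB -!mulr_sumr !sum_e mulrBr.
have a0 : forall i, xco p (iN i) - xco p ord_max != 0.
  by move=> i; rewrite subr_eq0; apply/eqP; exact: hUx.
have xq : forall i, xco (subst_pt p) i = - (tco p (iN i) - tco p ord_max) / (xco p (iN i) - xco p ord_max).
  by move=> i; rewrite /xco /subst_pt /= mxE.
have hq := hUD p hp.
set E0 := \prod_(k0 < N) cexp (chi (iN k0) * L k0 p).
have UpE : Upsilon chi L Psi p = E0 * Psi (subst_pt p) by [].
split.
- transitivity (\sum_(j < N.+1) (fun _ => 1 : CC R) j * dx (Upsilon chi L Psi) p j).
    by apply: eq_bigr => j _; rewrite mul1r.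
  by rewrite SW big1 // => i _; rewrite subrr mulr0.
- have Hf := hf _ hq.
  rewrite SW -[RHS](mulr0 (- E0)) -[in RHS]Hf mulr_sumr; apply: eq_bigr => i _.
  rewrite /Tm xq /aa /bb -/E0; field; exact: a0.
- rewrite big_split /=.
  have := SW (fun j => -2 * xco p j); rewrite /= => ->.
  rewrite big_ord_recr /= hk UpE.
  have Hh := hh _ hq.
  have -> : forall A B : CC R, A + (B + 2 * (k / 2) * (E0 * Psi (subst_pt p))) - k * (E0 * Psi (subst_pt p)) = A + B.
    by move=> A B; field; rewrite ?pnatr_eq0.
  rewrite -big_split -[RHS](mulr0 (- E0)) -[in RHS]Hh mulr_sumr; apply: eq_bigr => i _.
  rewrite /Tm xq /aa /bb -/E0.
  change (widen_ord (leqnSn N) i) with (iN i); rewrite /=.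
  by field; rewrite ?(a0 i).
Qed.
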